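(* For a Markov category $\mathcal C$, the following are equivalent: (i) $\mathcal C$ is positive. (ii) For every deterministic morphism $p\colon A\to X$, its bloom $p_{\mathrm{ic}}=(p\otimes\mathrm{id}_A)\circ\mathrm{copy}_A\colon A\to X\otimes A$ is an initial dilation of $p$.
   Context: A Markov category is a symmetric monoidal category $(\mathcal C,\otimes,I)$ with commutative comonoids $\mathrm{copy}_X\colon X\to X\otimes X$, $\mathrm{del}_X\colon X\to I$ compatible with $\otimes$, with $I$ terminal. $f\colon A\to X$ is deterministic if $\mathrm{copy}_X\circ f=(f\otimes f)\circ\mathrm{copy}_A$. $\mathcal C$ is positive if for all $f\colon X\to Y$, $g\colon Y\to Z$ with $g\circ f$ deterministic, $(\mathrm{id}_Y\otimes g)\circ\mathrm{copy}_Y\circ f=(f\otimes (g\circ f))\circ\mathrm{copy}_X$. A dilation of $p\colon A\to X$ is $\pi\colon A\to X\otimes E$ with $(\mathrm{id}_X\otimes\mathrm{del}_E)\circ\pi=p$. For a dilation $\pi\colon A\to X\otimes E$ and $f_1,f_2\colon E\to E'$, these are $\pi$-dilationally equal if for every dilation $\rho\colon A\to X\otimes E\otimes F$ of $\pi$, $(\mathrm{id}_X\otimes f_1\otimes\mathrm{id}_F)\circ\rho=(\mathrm{id}_X\otimes f_2\otimes\mathrm{id}_F)\circ\rho$. A dilation $\pi\colon A\to X\otimes E$ of $p$ is initial if for every dilation $\pi'\colon A\to X\otimes E'$ of $p$ there is $f\colon E\to E'$ with $(\mathrm{id}_X\otimes f)\circ\pi=\pi'$, unique up to $\pi$-dilational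 equality. *)

(* Defs.v *)
Set Implicit Arguments.
Unset Strict Implicit.

Record Category := {
  ob :> Type;
  hom : ob -> ob -> Type;
  comp : forall A B C : ob, hom B C -> hom A B -> hom A C;
  idm : forall A : ob, hom A A;
  comp_id_l : forall A B (f : hom A B), comp (idm B) f = f;
  comp_id_r : forall A B (f : hom A B), comp f (idm A) = f;
  comp_assoc : forall A B C D (f : hom A B) (g : hom B C) (h : hom C D),
      comp h (comp g f) = comp (comp h g) f
}.
Arguments hom {c} _ _.
Arguments comp {c A B C} _ _.
Arguments idm {c} A.

Declare Scope cat_scope.
Local Open Scope cat_scope.
Notation "g \o f" := (comp g f) (at level 40, left associativity) : cat_scope.

Record SymMonoidal (C : Category) := {
  tens : C -> C -> C;
  tensm : forall (A B A' B' : C), hom A B -> hom A' B' -> hom (tens A A') (tens B B');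
  unitI : C;
  tens_id : forall A B : C, tensm (idm A) (idm B) = idm (tens A B);
  tens_comp : forall (A B D A' B' D' : C) (f : hom A B) (g : hom B D)
                (f' : hom A' B') (g' : hom B' D'),
      tensm (g \o f) (g' \o f') = tensm g g' \o tensm f f';
  assoc : forall A B D : C, hom (tens (tens A B) D) (tens A (tens B D));
  assoc_inv : forall A B D : C, hom (tens A (tens B D)) (tens (tens A B) D);
  lunit : forall A : C, hom (tens unitI A) A;
  lunit_inv : forall A : C, hom A (tens unitI A);
  runit : forall A : C, hom (tens A unitI) A;
  runit_inv : forall A : C, hom A (tens A unitI);
  swap : forall A B : C, hom (tens A B) (tens B A);
  assoc_iso1 : forall A B D, assoc_inv A B D \o assoc A B D = idm _;
  assoc_iso2 : forall A B D, assoc A B D \o assoc_inv A B D = idm _;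
  lunit_iso1 : forall A, lunit_inv A \o lunit A = idm _;
  lunit_iso2 : forall A, lunit A \o lunit_inv A = idm _;
  runit_iso1 : forall A, runit_inv A \o runit A = idm _;
  runit_iso2 : forall A, runit A \o runit_inv A = idm _;
  swap_invol : forall A B, swap B A \o swap A B = idm _;
  assoc_nat : forall A B D A' B' D' (f : hom A A') (g : hom B B') (h : hom D D'),
      assoc A' B' D' \o tensm (tensm f g) h = tensm f (tensm g h) \o assoc A B D;
  lunit_nat : forall A B (f : hom A B), lunit B \o tensm (idm unitI) f = f \o lunit A;
  runit_nat : forall A B (f : hom A B), runit B \o tensm f (idm unitI) = f \o runit A;
  swap_nat : forall A B A' B' (f : hom A A') (g : hom B B'),
      swap A' B' \o tensm f g = tensm g f \o swap A B;
  pentagon : forall A B D E,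
      assoc A B (tens D E) \o assoc (tens A B) D E
      = tensm (idm A) (assoc B D E) \o assoc A (tens B D) E \o tensm (assoc A B D) (idm E);
  triangle : forall A B,
      tensm (idm A) (lunit B) \o assoc A unitI B = tensm (runit A) (idm B);
  hexagon : forall A B D,
      assoc B D A \o swap A (tens B D) \o assoc A B D
      = tensm (idm B) (swap A D) \o assoc B A D \o tensm (swap A B) (idm D)
}.
Arguments tens {C} _ _ _.
Arguments tensm {C} _ {A B A' B'} _ _.
Arguments unitI {C} _.
Arguments assoc {C} _ A B D.
Arguments assoc_inv {C} _ A B D.
Arguments lunit {C} _ A.
Arguments lunit_inv {C} _ A.
Arguments runit {C} _ A.
Arguments runit_inv {C} _ A.
Arguments swap {C} _ A B.

Definition midswap (C : Category) (M : SymMonoidal C) (A B : C) :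
  hom (tens M (tens M A A) (tens M B B)) (tens M (tens M A B) (tens M A B)) :=
  assoc_inv M A B (tens M A B)
  \o tensm M (idm A)
       (assoc M B A B \o tensm M (swap M A B) (idm B) \o assoc_inv M A B B)
  \o assoc M A A (tens M B B).

Record MarkovStr (C : Category) (M : SymMonoidal C) := {
  copy : forall A : C, hom A (tens M A A);
  del : forall A : C, hom A (unitI M);
  unit_terminal : forall (A : C) (f : hom A (unitI M)), f = del A;
  copy_counit_l : forall A, lunit M A \o tensm M (del A) (idm A) \o copy A = idm A;
  copy_counit_r : forall A, runit M A \o tensm M (idm A) (del A) \o copy A = idm A;
  copy_coassoc : forall A,
      assoc M A A A \o tensm M (copy A) (idm A) \o copy A
      = tensm M (idm A) (copy A) \o copy A;
  copy_comm : forall A, swap M A A \o copy A = copy A;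
  copy_tens : forall A B,
      copy (tens M A B) = midswap M A B \o tensm M (copy A) (copy B);
  del_tens : forall A B,
      del (tens M A B) = lunit M (unitI M) \o tensm M (del A) (del B)
}.
Arguments copy {C M} _ A.
Arguments del {C M} _ A.

Record MarkovCategory := {
  mc_cat :> Category;
  mc_mon : SymMonoidal mc_cat;
  mc_mk : MarkovStr mc_mon
}.

Section MarkovDefs.
Variable C : MarkovCategory.
Local Notation M := (mc_mon C).
Local Notation K := (mc_mk C).
Local Notation "A ⊗ B" := (tens M A B) (at level 34, left associativity).
Local Notation "f ⊗m g" := (tensm M f g) (at level 34, left associativity).

Definition deterministic (A X : C) (f : hom A X) : Prop :=
  copy K X \o f = (f ⊗m f) \o copy K A.

Definition positive : Prop :=
  forall (X Y Z : C) (f : hom X Y) (g : hom Y Z),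
    deterministic (g \o f) ->
    (idm Y ⊗m g) \o copy K Y \o f = (f ⊗m (g \o f)) \o copy K X.

Definition dilation (A X E : C) (p : hom A X) (pi : hom A (X ⊗ E)) : Prop :=
  runit M X \o (idm X ⊗m del K E) \o pi = p.

Definition dil_equal (A X E E' : C) (pi : hom A (X ⊗ E)) (f1 f2 : hom E E') : Prop :=
  forall (F : C) (rho : hom A ((X ⊗ E) ⊗ F)),
    dilation pi rho ->
    ((idm X ⊗m f1) ⊗m idm F) \o rho = ((idm X ⊗m f2) ⊗m idm F) \o rho.

Definition initial_dilation (A X E : C) (p : hom A X) (pi : hom A (X ⊗ E)) : Prop :=
  dilation p pi /\
  forall (E' : C) (pi' : hom A (X ⊗ E')), dilation p pi' ->
    (exists f : hom E E', (idm X ⊗m f) \o pi = pi') /\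
    (forall f1 f2 : hom E E',
        (idm X ⊗m f1) \o pi = pi' -> (idm X ⊗m f2) \o pi = pi' ->
        dil_equal pi f1 f2).

Definition bloom (A X : C) (p : hom A X) : hom A (X ⊗ A) :=
  (p ⊗m idm A) \o copy K A.

End MarkovDefs.

(* Main.v *)
Require Import Defs.
Open Scope cat_scope.
Section S.
Variable C : MarkovCategory.
Notation M := (mc_mon C).
Notation K := (mc_mk C).
Notation "f ⊗ g" := (tensm M f g) (at level 34, left associativity).
Notation I := (unitI M).
Notation ρ := (runit M).
Notation λ := (lunit M).
Notation α := (assoc M).
Notation αi := (assoc_inv M).
Notation σ := (swap M).
Notation cp := (copy K).
Notation dl := (del K).
Notation id := idm.

Ltac nrm := repeat rewrite <- comp_assoc.

Lemma term (A : C) (f g : hom A I) : f = g.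
Proof. rewrite (unit_terminal K f), (unit_terminal K g). reflexivity. Qed.

Lemma rw2 {B D E : C} (X : hom D E) (Y : hom B D) (Z : hom B E) :
  X \o Y = Z -> forall F (W : hom F B), X \o (Y \o W) = Z \o W.
Proof. intros H F W. rewrite comp_assoc, H. reflexivity. Qed.

Lemma rw2s {B D E : C} (X : hom D E) (Y : hom B D) (Z : hom B E) :
  Z = X \o Y -> forall F (W : hom F B), X \o (Y \o W) = Z \o W.
Proof. intros H F W. rewrite comp_assoc, H. reflexivity. Qed.
Tactic Notation "r2" open_constr(e) := rewrite (rw2 _ _ _ e); nrm.
Tactic Notation "r2s" open_constr(e) := rewrite (rw2s _ _ _ e); nrm.

Lemma tcW {A B D A' B' D' F : C} (f : hom A B) (g : hom B D) (f' : hom A' B') (g' : hom B' D') (W : hom F _) :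
  (g ⊗ g') \o ((f ⊗ f') \o W) = ((g \o f) ⊗ (g' \o f')) \o W.
Proof. rewrite tens_comp, comp_assoc. reflexivity. Qed.

Lemma tc {A B D A' B' D' : C} (f : hom A B) (g : hom B D) (f' : hom A' B') (g' : hom B' D') :
  (g ⊗ g') \o (f ⊗ f') = ((g \o f) ⊗ (g' \o f')).
Proof. rewrite tens_comp. reflexivity. Qed.

Lemma ai_nat {A B D A' B' D' : C} (f : hom A A') (g : hom B B') (h : hom D D') :
  αi A' B' D' \o (f ⊗ (g ⊗ h)) = ((f ⊗ g) ⊗ h) \o αi A B D.
Proof.
  rewrite <- (comp_id_r (αi A' B' D' \o _)).
  rewrite <- (assoc_iso2 M A B D). nrm.
  rewrite (comp_assoc (αi A B D) (α A B D)), <- assoc_nat.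
  rewrite comp_assoc, comp_assoc, assoc_iso1, comp_id_l. reflexivity.
Qed.

Lemma tri' (A B : C) : id A ⊗ λ B = (ρ A ⊗ id B) \o αi A I B.
Proof.
  rewrite <- triangle. rewrite <- comp_assoc, assoc_iso2, comp_id_r. reflexivity.
Qed.

Definition π1 (X E : C) : hom (tens M X E) X := ρ X \o (id X ⊗ dl E).
Definition π2 (X E : C) : hom (tens M X E) E := λ E \o (dl X ⊗ id E).

Ltac simp := repeat (first [rewrite <- comp_assoc | rewrite tcW | rewrite tc | rewrite tens_id | rewrite comp_id_l | rewrite comp_id_r]).
Ltac fin := unfold π1, π2 in *; simp; try reflexivity.
Lemma S1 (X E Y : C) (q : hom Y E) :
  (π1 X E ⊗ q) \o αi X E Y = id X ⊗ (π2 E E \o (id E ⊗ q)).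
Proof.
  assert (H : π1 X E ⊗ q = (ρ X ⊗ id E) \o (((id X ⊗ dl E) ⊗ id E) \o ((id X ⊗ id E) ⊗ q))).
  { rewrite !tc, ?tens_id, !comp_id_r, !comp_id_l. reflexivity. }
  rewrite H. nrm. rewrite <- ai_nat. r2s (ai_nat _ _ _). r2s (tri' _ _).
  fin.
Qed.

Lemma S2 (X E : C) :
  π2 E E \o ((id E ⊗ π2 X E) \o (α E X E \o ((σ X E ⊗ id E) \o αi X E E)))
  = π2 E E \o π2 X (tens M E E).
Proof.
  assert (H1 : id E ⊗ π2 X E = (id E ⊗ λ E) \o (id E ⊗ (dl X ⊗ id E))) by fin.
  rewrite H1. nrm. r2s (assoc_nat _ _ _ _). r2 (triangle _ _ _).
  assert (H2 : π2 E E \o π2 X (tens M E E) = λ E \o (dl X ⊗ π2 E E)).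
  { unfold π2 at 2. nrm. rewrite (comp_assoc _ (λ _)), <- lunit_nat. fin. }
  rewrite H2.
  assert (H3 : dl X ⊗ π2 E E = (id I ⊗ λ E) \o (dl X ⊗ (dl E ⊗ id E))) by fin.
  rewrite H3, tri'. nrm. rewrite ai_nat.
  unfold π2. simp. f_equal. f_equal. f_equal. apply term.
Qed.

Lemma cr (A : C) : ρ A \o ((id A ⊗ dl A) \o cp A) = id A.
Proof. rewrite comp_assoc. apply copy_counit_r. Qed.
Lemma cl (A : C) : λ A \o ((dl A ⊗ id A) \o cp A) = id A.
Proof. rewrite comp_assoc. apply copy_counit_l. Qed.

Lemma L2 (X E : C) : (π1 X E ⊗ π2 X E) \o cp (tens M X E) = id (tens M X E).
Proof.
  rewrite copy_tens. unfold midswap. nrm.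
  r2 (S1 _ _ _ _). rewrite tcW, comp_id_l. nrm. rewrite S2.
  assert (H : id X ⊗ (π2 E E \o π2 X (tens M E E)) = (id X ⊗ π2 E E) \o ((id X ⊗ λ _) \o (id X ⊗ (dl X ⊗ id _)))) by fin.
  rewrite H. nrm. r2s (assoc_nat _ _ _ _). r2 (triangle _ _ _).
  unfold π2. simp. rewrite cr, cl. apply tens_id.
Qed.

Lemma Mm_nat {A B A' B' : C} (a2 : hom A A') (b1 b2 : hom B B') :
  α B' A' B' \o ((σ A' B' ⊗ id B') \o (αi A' B' B' \o (a2 ⊗ (b1 ⊗ b2))))
  = (b1 ⊗ (a2 ⊗ b2)) \o (α B A B \o ((σ A B ⊗ id B) \o αi A B B)).
Proof.
  rewrite ai_nat. rewrite (rw2s _ _ _ (assoc_nat _ _ _ _)). simp. rewrite swap_nat. reflexivity.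
Qed.

Lemma ms_nat {A B A' B' : C} (a1 a2 : hom A A') (b1 b2 : hom B B') :
  midswap M A' B' \o ((a1 ⊗ a2) ⊗ (b1 ⊗ b2)) = ((a1 ⊗ b1) ⊗ (a2 ⊗ b2)) \o midswap M A B.
Proof.
  unfold midswap. nrm. rewrite assoc_nat. rewrite (rw2s _ _ _ (ai_nat _ _ _)). simp.
  rewrite Mm_nat. reflexivity.
Qed.

Lemma coas (A : C) : α A A A \o ((cp A ⊗ id A) \o cp A) = (id A ⊗ cp A) \o cp A.
Proof. rewrite comp_assoc. apply copy_coassoc. Qed.

Lemma coas' (A : C) : αi A A A \o ((id A ⊗ cp A) \o cp A) = (cp A ⊗ id A) \o cp A.
Proof. rewrite <- coas. nrm. rewrite (comp_assoc _ (α _ _ _)), assoc_iso1, comp_id_l. reflexivity. Qed.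

Lemma D1 (A : C) : α A A (tens M A A) \o ((cp A ⊗ cp A) \o cp A) = (id A ⊗ ((id A ⊗ cp A) \o cp A)) \o cp A.
Proof.
  assert (H : cp A ⊗ cp A = ((id A ⊗ id A) ⊗ cp A) \o (cp A ⊗ id A)) by fin.
  rewrite H. nrm. r2 (assoc_nat _ _ _ _). rewrite coas. fin.
Qed.

Lemma D2 (A : C) : α A A A \o ((σ A A ⊗ id A) \o (αi A A A \o ((id A ⊗ cp A) \o cp A))) = (id A ⊗ cp A) \o cp A.
Proof.
  rewrite coas'. rewrite tcW, copy_comm, comp_id_l. apply coas.
Qed.

Lemma cp_det (A : C) : deterministic (cp A).
Proof.
  unfold deterministic. rewrite copy_tens. unfold midswap. nrm.
  rewrite D1. simp. rewrite D2.
  rewrite <- D1. nrm. rewrite (comp_assoc _ (α _ _ _)), assoc_iso1, comp_id_l. reflexivity.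
Qed.

Lemma det_comp {A B D : C} (f : hom A B) (g : hom B D) :
  deterministic f -> deterministic g -> deterministic (g \o f).
Proof.
  unfold deterministic. intros Hf Hg.
  rewrite comp_assoc, Hg. nrm. rewrite Hf. simp. reflexivity.
Qed.

Lemma det_tid {A X : C} (p : hom A X) : deterministic p -> deterministic (p ⊗ id A).
Proof.
  unfold deterministic. intros Hp. rewrite !copy_tens. nrm.
  rewrite tc, Hp, comp_id_r.
  assert (H : ((p ⊗ p) \o cp A) ⊗ cp A = ((p ⊗ p) ⊗ (id A ⊗ id A)) \o (cp A ⊗ cp A)).
  { rewrite tc, tens_id, comp_id_l. reflexivity. }
  rewrite H. r2 (ms_nat _ _ _ _). reflexivity.
Qed.

Lemma bloom_det {A X : C} (p : hom A X) : deterministic p -> deterministic (bloom p).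
Proof. intros Hp. unfold bloom. apply det_comp. apply cp_det. apply det_tid, Hp. Qed.

Lemma marg1 {A Z Y : C} (u : hom A Z) (v : hom A Y) : π1 Z Y \o ((u ⊗ v) \o cp A) = u.
Proof.
  unfold π1. simp. rewrite (term _ (dl Y \o v) (dl A)).
  assert (H : u ⊗ dl A = (u ⊗ id I) \o (id A ⊗ dl A)) by fin.
  rewrite H. nrm. r2 (runit_nat _ _). rewrite cr. apply comp_id_r.
Qed.

Lemma marg2 {A Z Y : C} (u : hom A Z) (v : hom A Y) : π2 Z Y \o ((u ⊗ v) \o cp A) = v.
Proof.
  unfold π2. simp. rewrite (term _ (dl Z \o u) (dl A)).
  assert (H : dl A ⊗ v = (id I ⊗ v) \o (dl A ⊗ id A)) by fin.
  rewrite H. nrm. r2 (lunit_nat _ _). rewrite cl. apply comp_id_r.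
Qed.

Lemma main :
  positive C <->
  (forall (A X : C) (p : hom A X),
      deterministic p -> initial_dilation p (bloom p)).
Proof.
  split.
  - intros Hpos A X p Hp. split.
    { change (π1 X A \o bloom p = p). unfold bloom. apply marg1. }
    intros E' pi' Hd. change (π1 X E' \o pi' = p) in Hd. split.
    + pose proof (Hpos A (tens M X E') X pi' (π1 X E')) as P.
      rewrite Hd in P. specialize (P Hp).
      exists (π2 X E' \o pi').
      transitivity (σ _ _ \o ((π2 X E' ⊗ id X) \o (((id _ ⊗ π1 X E') \o cp _) \o pi'))).
      * rewrite P. unfold bloom. simp. r2 (swap_nat _ _ _). rewrite copy_comm. reflexivity.
      * simp. r2 (swap_nat _ _ _). r2 (copy_comm _ _). r2 (L2 _ _). apply comp_id_l.
    + intros f1 f2 H1 H2 F rho Hr. change (π1 (tens M X A) F \o rho = bloom p) in Hr.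
      pose proof (Hpos A _ _ rho (π1 (tens M X A) F)) as P.
      rewrite Hr in P. specialize (P (bloom_det p Hp)).
      assert (G : forall f : hom A E', (id X ⊗ f) \o bloom p = pi' ->
                ((id X ⊗ f) ⊗ id F) \o rho
                = σ _ _ \o (((π2 _ _ \o rho) ⊗ pi') \o cp A)).
      { intros f Hf.
        transitivity (σ _ _ \o ((π2 (tens M X A) F ⊗ (id X ⊗ f)) \o (((id _ ⊗ π1 (tens M X A) F) \o cp _) \o rho))).
        - symmetry. simp. r2 (swap_nat _ _ _). r2 (copy_comm _ _).
          rewrite <- (comp_id_l (π2 (tens M X A) F)). rewrite <- tc. nrm.
          r2 (L2 _ _). rewrite comp_id_l. reflexivity.
        - rewrite P. simp. rewrite Hf. reflexivity. }
      rewrite (G f1 H1), (G f2 H2). reflexivity.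
  - intros H X Y Z f g Hdet.
    set (p := g \o f).
    destruct (H X Z p Hdet) as [_ Hi].
    destruct (Hi Y ((g ⊗ id Y) \o cp Y \o f)) as [[h Hh] _].
    { change (π1 Z Y \o ((g ⊗ id Y) \o cp Y \o f) = p). nrm.
      rewrite (comp_assoc f (cp Y)), comp_assoc, marg1. reflexivity. }
    assert (Ehf : h = f).
    { rewrite <- (marg2 p h). transitivity (π2 Z Y \o ((id Z ⊗ h) \o bloom p)).
      - unfold bloom. simp. reflexivity.
      - rewrite Hh. nrm. rewrite (comp_assoc f (cp Y)), comp_assoc, marg2, comp_id_l. reflexivity. }
    subst h.
    transitivity (σ _ _ \o ((g ⊗ id Y) \o cp Y \o f)).
    + symmetry. nrm. r2 (swap_nat _ _ _). r2 (copy_comm _ _). reflexivity.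
    + rewrite <- Hh. unfold bloom. simp. r2 (swap_nat _ _ _). rewrite copy_comm. reflexivity.
Qed.
End S.

Theorem proposition4p12 (C : MarkovCategory) :
  positive C <->
  (forall (A X : C) (p : hom A X),
      deterministic p -> initial_dilation p (bloom p)).
Proof. exact (main C). Qed.
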